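(* The triple $(\mathcal{APT},[\cdot,\cdot],\rhd)$ is a post-Lie algebra. That is, $[\cdot,\cdot]$ is a Lie bracket on $\mathcal{APT}$, and for all $X,Y,Z \in \mathcal{APT}$: \[ X\rhd[Y,Z]=[X\rhd Y,Z]+[Y,X\rhd Z], \] \[ [X,Y]\rhd Z=X\rhd(Y\rhd Z)-(X\rhd Y)\rhd Z-Y\rhd(X\rhd Z)+(Y\rhd X)\rhd Z. \]
   Context: Work over a fixed ground field. A planar rooted tree is a finite rooted tree, with edges oriented away from the root, together with a total order on the outgoing edges of each vertex; $\mathcal{PT}$ is the span of isomorphism classes of planar rooted trees. $\mathrm{Lie}(\mathcal{PT})$ is the free Lie algebra on $\mathcal{PT}$, with bracket $[\cdot,\cdot]$. For planar trees $t_1,t_2$, $t_1\rhd t_2$ is the sum, over all vertices $v$ of $t_2$, of the planar tree obtained by adding an edge from $v$ to the root of $t_1$ as the leftmost outgoing edge of $v$. It is extended to $\mathrm{Lie}(\mathcal{PT})$ by the rules \[ t_1\rhd[t_2,t_3]=[t_1\rhd t_2,t_3]+[t_2,t_1\rhd t_3], \] \[ [t_1,t_2]\rhd t_3=t_1\rhd(t_2\rhd t_3)-(t_1\rhd t_2)\rhd t_3-t_2\rhd(t_1\rhd t_3)+(t_2\rhd t_1)\rhd t_3. \] A planar aroma is an isomorphism class of finite connected directed graphs (loops allowed) in which every vertex has exactly one incoming edge, together with a total order on the outgoing edges at each vertex. $\mathcal{PA}$ is their span and $S(\mathcal{PA})$ is the symmetric algebra on $\mathcal{PA}$. For a planar tree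 $t$ and a monomial $\alpha\in S(\mathcal{PA})$, $\rho(t)(\alpha)$ is the sum, over all vertices $v$ of all factors of $\alpha$, of the monomial obtained by adding an edge from $v$ to the root of $t$ as the leftmost outgoing edge of $v$; this is extended linearly in $\alpha$. For Lie polynomials, \[ \rho([t_1,t_2])=\rho(t_1)\rho(t_2)-\rho(t_1\rhd t_2)-\rho(t_2)\rho(t_1)+\rho(t_2\rhd t_1). \] Set $\mathcal{APT}=S(\mathcal{PA})\otimes \mathrm{Lie}(\mathcal{PT})$, with elements written $\alpha t$. Define, for $\alpha_i\in S(\mathcal{PA})$ and $t_i\in\mathrm{Lie}(\mathcal{PT})$ (extended bilinearly): \[ [\alpha_1t_1,\alpha_2t_2]=\alpha_1\alpha_2[t_1,t_2], \] \[ \alpha_1t_1\rhd\alpha_2t_2=\alpha_1\,\rho(t_1)(\alpha_2)\,t_2+\alpha_1\alpha_2\,(t_1\rhd t_2). \] *)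

(* Defs.v *)
From HB Require Import structures.
From mathcomp Require Import all_boot all_order all_algebra.
From mathcomp Require Import finmap multiset.
From mathcomp.multinomials Require Import monalg.
Set Implicit Arguments. Unset Strict Implicit. Unset Printing Implicit Defensive.
Import GRing.Theory.

(* Planar rooted trees.  Isomorphism classes of planar rooted trees    *)
(* are exactly the terms of this inductive type: a root together with  *)
(* the ordered (left-to-right) list of the subtrees of its children.   *)
Inductive ptree : Type := PNode of seq ptree.

Fixpoint pt2g (t : ptree) : GenTree.tree unit :=
  let: PNode s := t in GenTree.Node 0 (map pt2g s).
Fixpoint g2pt (g : GenTree.tree unit) : ptree :=
  match g with GenTree.Leaf _ => PNode [::] | GenTree.Node _ s => PNode (map g2pt s) end.
Fixpoint pt2gK (t : ptree) : g2pt (pt2g t) = t :=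
  match t return g2pt (pt2g t) = t with
  | PNode s => f_equal PNode
     ((fix F (s : seq ptree) : map g2pt (map pt2g s) = s :=
        match s return map g2pt (map pt2g s) = s with
        | [::] => erefl
        | x :: s' => f_equal2 cons (pt2gK x) (F s') end) s) end.
HB.instance Definition _ := Countable.copy ptree (can_type pt2gK).

(* graft a t : the list (with multiplicities) of the planar trees obtained
   by adding an edge from a vertex v of t to the root of a, as the leftmost
   outgoing edge of v, v ranging over all vertices of t. *)
Fixpoint graft (a t : ptree) : seq ptree :=
  let: PNode s := t in
  PNode (a :: s) ::
  map PNode ((fix gs (s : seq ptree) : seq (seq ptree) :=
                match s with
                | [::] => [::]
                | c :: s' => [seq x :: s' | x <- graft a c] ++ [seq c :: y | y <- gs s']
                end) s).

Fixpoint graft_forest (a : ptree) (s : seq ptree) : seq (seq ptree) :=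
  match s with
  | [::] => [::]
  | c :: s' => [seq x :: s' | x <- graft a c] ++ [seq c :: y | y <- graft_forest a s']
  end.

(* Planar aromas.  A planar aroma (connected graph, every vertex has    *)
(* exactly one incoming edge, ordered outgoing edges) consists of a     *)
(* unique directed cycle v_1 -> v_2 -> ... -> v_n -> v_1 (n >= 1, n = 1 *)
(* is a loop) with planar trees hanging from the cycle vertices.  A     *)
(* cycle vertex is encoded by (l, r): the outgoing edges of v_i are, in *)
(* order, the edges to the roots of the trees of l, then the cycle edge *)
(* v_i -> v_(i+1), then the edges to the roots of the trees of r.       *)
(* A raw aroma is the nonempty list [v_1; ...; v_n]; two raw aromas     *)
(* give isomorphic planar aromas iff they are rotations of each other. *)
Definition avert := (seq ptree * seq ptree)%type.
Definition raroma := seq avert.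

Definition rotations (a : raroma) : seq raroma :=
  [seq rot i a | i <- iota 0 (size a).+1].

Definition canon (a : raroma) : raroma := choose (fun b => b \in rotations a) a.

Lemma rot_in_rotations n a : rot n a \in rotations a.
Proof.
rewrite rot_minn; apply/mapP; exists (minn n (size a)) => //.
by rewrite mem_iota add0n ltnS geq_minr.
Qed.

Lemma rotations_rot n a : rotations (rot n a) =i rotations a.
Proof.
move=> b; apply/idP/idP => /mapP [i _ ->].
  by rewrite rot_rot_add rot_in_rotations.
rewrite (rot_minn n a); set m := minn _ _.
have E : rot i a = rot i (rot (size a - m) (rot m a)).
  by rewrite -[X in rot i X = _](rotK m a) /rotr size_rot.
by rewrite E rot_rot_add rot_in_rotations.
Qed.

Lemma canon_rot n a : canon (rot n a) = canon a.
Proof.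
rewrite /canon (@eq_choose _ _ (fun b => b \in rotations a)); last first.
  by move=> b; rewrite rotations_rot.
apply: choose_id; first exact: rot_in_rotations.
by rewrite -{1}(rot0 a) rot_in_rotations.
Qed.

Lemma canon_is_rot a : exists n, canon a = rot n a.
Proof.
have : canon a \in rotations a.
  by apply: (@chooseP _ (fun b => b \in rotations a)); rewrite -{1}(rot0 a) rot_in_rotations.
by case/mapP => i _ ->; exists i.
Qed.

Lemma canon_ok (v : avert) (a : raroma) :
  (canon (v :: a) != [::]) && (canon (canon (v :: a)) == canon (v :: a)).
Proof.
have [n E] := canon_is_rot (v :: a).
by rewrite {2}E canon_rot eqxx andbT E -size_eq0 size_rot.
Qed.

Definition aroma := {a : raroma | (a != [::]) && (canon a == a)}.

Definition aroma_of (v : avert) (a : raroma) : aroma :=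
  exist _ (canon (v :: a)) (canon_ok v a).

Definition graft_vert (a : ptree) (v : avert) : seq avert :=
  (a :: v.1, v.2) :: [seq (l, v.2) | l <- graft_forest a v.1]
                  ++ [seq (v.1, r) | r <- graft_forest a v.2].

Fixpoint graft_cycle (a : ptree) (c : raroma) : seq raroma :=
  match c with
  | [::] => [::]
  | v :: c' => [seq w :: c' | w <- graft_vert a v] ++ [seq v :: d | d <- graft_cycle a c']
  end.

(* words of planar trees (basis of the tensor algebra T(PT)) *)
Definition word := seq ptree.
HB.instance Definition _ := Choice.on word.

Lemma word_unitm (x y : word) : x ++ y = [::] -> x = [::] /\ y = [::].
Proof. by case: x; case: y. Qed.
HB.instance Definition _ := Choice_isMonomialDef.Build word
  (@catA _) (@cat0s _) (@cats0 _) word_unitm.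

(* monomials of the symmetric algebra S(PA): multisets of planar aromas *)
Definition amono := {mset aroma}%mset.
HB.instance Definition _ := Choice.on amono.

Lemma amono_unitm (x y : amono) :
  (x `+` y)%mset = mset0 -> x = mset0 /\ y = mset0.
Proof.
move=> /msetP H; split; apply/msetP => b; have := H b;
by rewrite msetE2 !mset0E => /eqP; rewrite addn_eq0 => /andP [/eqP ? /eqP ?].
Qed.
HB.instance Definition _ := Choice_isMonomialDef.Build amono
  (@msetDA _) (@mset0D _) (@msetD0 _) amono_unitm.

(* monomials of S(PA) (x) T(PT) *)
Definition apmono := (amono * word)%type.
HB.instance Definition _ := Choice.on apmono.

Definition apmul (x y : apmono) : apmono := ((x.1 `+` y.1)%mset, x.2 ++ y.2).
Lemma apmulA : associative apmul.
Proof. by move=> x y z; rewrite /apmul /= msetDA catA. Qed.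
Lemma ap1m : left_id (mset0, [::]) apmul.
Proof. by case=> a b; rewrite /apmul /= mset0D. Qed.
Lemma apm1 : right_id (mset0, [::]) apmul.
Proof. by case=> a b; rewrite /apmul /= msetD0 cats0. Qed.
Lemma ap_unitm (x y : apmono) : apmul x y = (mset0, [::]) ->
  x = (mset0, [::]) /\ y = (mset0, [::]).
Proof.
case: x y => [a b] [c d] [] /amono_unitm [-> ->] /word_unitm [-> ->]; by [].
Qed.
HB.instance Definition _ := Choice_isMonomialDef.Build apmono apmulA ap1m apm1 ap_unitm.

Section Spaces.
Variable k : fieldType.
Local Open Scope ring_scope.

(* T(PT): free associative algebra on PT (concatenation product);     *)
(* Lie(PT) is realised inside it as the Lie polynomials.              *)
Definition TPT := {malg k[word]}.
Definition SPA := {malg k[amono]}.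
Definition VAPT := {malg k[apmono]}.

Definition tree_el (t : ptree) : TPT := << [:: t] >>.

Definition tbr (X Y : TPT) : TPT := X * Y - Y * X.

(* Lie(PT) = the smallest subspace of T(PT) containing the trees and   *)
(* closed under the commutator: the free Lie algebra on PT.            *)
Inductive isLie : TPT -> Prop :=
| isLie_tree t : isLie (tree_el t)
| isLie_zero : isLie 0
| isLie_lin a X Y : isLie X -> isLie Y -> isLie (a *: X + Y)
| isLie_br X Y : isLie X -> isLie Y -> isLie (tbr X Y).

Definition graftT (t1 t2 : ptree) : TPT := \sum_(s <- graft t1 t2) tree_el s.

(* rho(t)(m) for a planar tree t and a monomial m of S(PA): sum over all *)
(* factors of m (with multiplicity) and all vertices of that factor.     *)
Definition rho_tree (t : ptree) (m : amono) : SPA :=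
  \sum_(a <- enum_mset m)
     \sum_(b <- graft_cycle t (val a))
        (if b is v :: b' then << ((m `\ a) `+` [mset aroma_of v b'])%mset >> else 0).

(* The defining properties of |> on Lie(PT) and of rho, as given in the  *)
(* paper: bilinear, given on trees by grafting, and extended to Lie      *)
(* polynomials by the stated rules.  These determine both operations     *)
(* uniquely on Lie(PT).                                                  *)
Definition grafting_ops (gr : TPT -> TPT -> TPT) (rho : TPT -> SPA -> SPA) : Prop :=
  (forall a X Y Z, gr (a *: X + Y) Z = a *: gr X Z + gr Y Z /\
                       gr Z (a *: X + Y) = a *: gr Z X + gr Z Y) /\
  (forall t1 t2, gr (tree_el t1) (tree_el t2) = graftT t1 t2) /\
  (forall X Y Z, isLie X -> isLie Y -> isLie Z ->
          gr X (tbr Y Z) = tbr (gr X Y) Z + tbr Y (gr X Z)) /\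
  (forall X Y Z, isLie X -> isLie Y -> isLie Z ->
          gr (tbr X Y) Z = gr X (gr Y Z) - gr (gr X Y) Z - gr Y (gr X Z) + gr (gr Y X) Z) /\
  (forall a X Y al, rho (a *: X + Y) al = a *: rho X al + rho Y al /\
                        rho X (a *: al) = a *: rho X al /\
                        (forall be, rho X (al + be) = rho X al + rho X be)) /\
  (forall t m, rho (tree_el t) << m >> = rho_tree t m) /\
  (forall X Y al, isLie X -> isLie Y ->
          rho (tbr X Y) al = rho X (rho Y al) - rho (gr X Y) al
                             - rho Y (rho X al) + rho (gr Y X) al).

(* alpha t in APT = S(PA) (x) Lie(PT), realised inside S(PA) (x) T(PT) *)
Definition tens (al : SPA) (X : TPT) : VAPT :=
  \sum_(p <- msupp al) \sum_(q <- msupp X) (al@_p * X@_q) *: << (p, q) : apmono >>.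

Definition inAPT (Z : VAPT) : Prop :=
  exists s : seq (SPA * TPT),
    (forall x, x \in s -> isLie x.2) /\ Z = \sum_(x <- s) tens x.1 x.2.

(* [alpha1 t1, alpha2 t2] = alpha1 alpha2 [t1, t2] *)
Definition vbr (Z1 Z2 : VAPT) : VAPT := Z1 * Z2 - Z2 * Z1.

Definition vgr (gr : TPT -> TPT -> TPT) (rho : TPT -> SPA -> SPA) (Z1 Z2 : VAPT) : VAPT :=
  \sum_(p <- msupp Z1) \sum_(q <- msupp Z2)
     (Z1@_p * Z2@_q) *:
       (tens (<< p.1 >> * rho << p.2 >> << q.1 >>) << q.2 >>
        + tens (<< p.1 >> * << q.1 >>) (gr << p.2 >> << q.2 >>)).

End Spaces.

Local Open Scope ring_scope.
Definition is_post_Lie (R : ringType) (U : lmodType R) (P : U -> Prop)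
    (br gr : U -> U -> U) : Prop :=
  (P 0 /\ (forall a x y, P x -> P y -> P (a *: x + y))) /\
  (forall x y, P x -> P y -> P (br x y) /\ P (gr x y)) /\
  (forall a x y z, P x -> P y -> P z ->
         [/\ br (a *: x + y) z = a *: br x z + br y z,
             br z (a *: x + y) = a *: br z x + br z y,
             gr (a *: x + y) z = a *: gr x z + gr y z &
             gr z (a *: x + y) = a *: gr z x + gr z y]) /\
  (forall x, P x -> br x x = 0) /\
  (forall x y z, P x -> P y -> P z ->
         br x (br y z) + br y (br z x) + br z (br x y) = 0) /\
  (forall x y z, P x -> P y -> P z ->
         gr x (br y z) = br (gr x y) z + br y (gr x z)) /\
  (forall x y z, P x -> P y -> P z ->
         gr (br x y) z = gr x (gr y z) - gr (gr x y) z - gr y (gr x z) + gr (gr y x) z).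

(* Main.v *)
Require Import Defs.
From HB Require Import structures.
From mathcomp Require Import all_boot all_order all_algebra.
From mathcomp Require Import finmap multiset.
From mathcomp.multinomials Require Import monalg.
Set Implicit Arguments. Unset Strict Implicit. Unset Printing Implicit Defensive.
Import GRing.Theory.
Local Open Scope fset_scope.
Local Open Scope ring_scope.
From mathcomp Require Import ring.

HB.instance Definition _ := MonomialDef_isConomialDef.Build amono (@msetDC _).

Section Lin.
Variable k : fieldType.

Definition lin (U V : lmodType k) (f : U -> V) :=
  forall c x y, f (c *: x + y) = c *: f x + f y.

Section LinTheory.
Variables (U V : lmodType k) (f : U -> V) (Hf : lin f).
Lemma lin0 : f 0 = 0.
Proof. have := Hf 1 0 0; rewrite !scale1r !addr0 => E.
by apply: (@addrI _ (f 0)); rewrite -E addr0. Qed.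
Lemma linD x y : f (x + y) = f x + f y.
Proof. by have := Hf 1 x y; rewrite !scale1r. Qed.
Lemma linZ c x : f (c *: x) = c *: f x.
Proof. by have := Hf c x 0; rewrite !addr0 lin0 addr0. Qed.
Lemma linN x : f (- x) = - f x.
Proof. by rewrite -scaleN1r linZ scaleN1r. Qed.
Lemma linB x y : f (x - y) = f x - f y.
Proof. by rewrite linD linN. Qed.
Lemma lin_sum (I : Type) (s : seq I) (P : pred I) (F : I -> U) :
  f (\sum_(i <- s | P i) F i) = \sum_(i <- s | P i) f (F i).
Proof. exact: (big_morph _ linD lin0). Qed.
End LinTheory.

Lemma lin_comp (U V W : lmodType k) (f : V -> W) (g : U -> V) :
  lin f -> lin g -> lin (fun x => f (g x)).
Proof. by move=> Hf Hg c x y; rewrite Hg Hf. Qed.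
Lemma lin_add (U V : lmodType k) (f g : U -> V) :
  lin f -> lin g -> lin (fun x => f x + g x).
Proof. move=> Hf Hg c x y; rewrite Hf Hg scalerDr.
by rewrite -!addrA; congr (_ + _); rewrite addrCA. Qed.
Lemma lin_opp (U V : lmodType k) (f : U -> V) : lin f -> lin (fun x => - f x).
Proof. by move=> Hf c x y; rewrite Hf opprD scalerN. Qed.
Lemma lin_sub (U V : lmodType k) (f g : U -> V) :
  lin f -> lin g -> lin (fun x => f x - g x).
Proof. by move=> Hf Hg; apply: lin_add => //; apply: lin_opp. Qed.
Lemma lin_cst0 (U V : lmodType k) : lin (fun _ : U => (0 : V)).
Proof. by move=> c x y; rewrite scaler0 addr0. Qed.

Section Malg.
Variables (K : choiceType) (V : lmodType k).

Lemma monalg_scale (c : k) (p : K) : << c *g p >> = c *: (<< p >> : {malg k[K]}).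
Proof. by apply/malgP => q; rewrite mcoeffZ !mcoeffU mulr_natr. Qed.

Lemma lin_expand (f : {malg k[K]} -> V) : lin f ->
  forall x, f x = \sum_(p <- msupp x) x@_p *: f << p >>.
Proof.
move=> Hf x; rewrite {1}(monalgE x) (lin_sum Hf); apply: eq_bigr => p _.
by rewrite monalg_scale linZ.
Qed.

Lemma lin_ext (f g : {malg k[K]} -> V) : lin f -> lin g ->
  (forall p, f << p >> = g << p >>) -> forall x, f x = g x.
Proof.
move=> Hf Hg E x; rewrite (lin_expand Hf) (lin_expand Hg).
by apply: eq_bigr => p _; rewrite E.
Qed.

Definition supsum (h : K -> V) (x : {malg k[K]}) : V :=
  \sum_(p <- msupp x) x@_p *: h p.

Lemma supsumEw h x (d : {fset K}) : msupp x `<=` d ->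
  supsum h x = \sum_(p <- d) x@_p *: h p.
Proof.
move=> le; rewrite /supsum (big_fset_incl _ le) //= => p _ /mcoeff_outdom ->.
by rewrite scale0r.
Qed.

Lemma lin_supsum h : lin (supsum h).
Proof.
move=> c x y.
have le : msupp (c *: x + y) `<=` msupp x `|` msupp y.
  apply: fsubset_trans (msuppD_le _ _) _.
  by apply: fsetSU; apply: msuppZ_le.
rewrite (supsumEw h le) (supsumEw h (fsubsetUl (msupp x) (msupp y))).
rewrite (supsumEw h (fsubsetUr (msupp x) (msupp y))) scaler_sumr -big_split /=.
by apply: eq_bigr => p _; rewrite mcoeffD mcoeffZ scalerDl scalerA.
Qed.

Lemma supsumU h p : supsum h << p >> = h p.
Proof. by rewrite /supsum msuppU oner_eq0 big_seq_fset1 mcoeffUU scale1r. Qed.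

End Malg.

Section Bil.
Variables (K1 K2 : choiceType) (V : lmodType k).
Definition B (h : K1 -> K2 -> V) (x : {malg k[K1]}) (y : {malg k[K2]}) : V :=
  \sum_(p <- msupp x) \sum_(q <- msupp y) (x@_p * y@_q) *: h p q.

Lemma BEl h x y : B h x y = supsum (fun p => supsum (h p) y) x.
Proof.
apply: eq_bigr => p _; rewrite /supsum scaler_sumr; apply: eq_bigr => q _.
by rewrite scalerA.
Qed.
Lemma BEr h x y : B h x y = supsum (fun q => supsum (h^~ q) x) y.
Proof.
rewrite /B exchange_big; apply: eq_bigr => q _; rewrite /supsum scaler_sumr.
by apply: eq_bigr => p _; rewrite scalerA mulrC.
Qed.
Lemma B_linl h y : lin (B h ^~ y).
Proof. by move=> c x x'; rewrite !BEl lin_supsum. Qed.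
Lemma B_linr h x : lin (B h x).
Proof. by move=> c y y'; rewrite !BEr lin_supsum. Qed.
Lemma BU h p q : B h << p >> << q >> = h p q.
Proof. by rewrite BEl !supsumU. Qed.
End Bil.
End Lin.
Definition derivS (R : pzRingType) (D : R -> R) := forall a b, D (a * b) = D a * b + a * D b.

Lemma deriv_br_gen (R : comPzRingType) (D1 D2 D3 D4 : R -> R) :
  (forall x y, D1 (x + y) = D1 x + D1 y) -> (forall x y, D2 (x + y) = D2 x + D2 y) ->
  derivS D1 -> derivS D2 -> derivS D3 -> derivS D4 ->
  derivS (fun x => D1 (D2 x) - D3 x - D2 (D1 x) + D4 x).
Proof.
move=> a1 a2 d1 d2 d3 d4 a b /=.
rewrite d2 a1 !d1 a2 !d2 d3 d4; ring.
Qed.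

Section Comb.
Variable k : fieldType.

Lemma perm_enum_msetD (p q : amono) :
  perm_eq (enum_mset (p `+` q)%mset) (enum_mset p ++ enum_mset q).
Proof.
apply/allP => x _ /=; rewrite count_cat !count_mem_mset msetE2; exact: eqxx.
Qed.

Lemma msetBD1l (p q : amono) a : a \in p -> ((p `+` q) `\ a = (p `\ a) `+` q)%mset.
Proof.
move=> ap; apply/msetP => x; rewrite !msetE2 !msetnE.
case: (eqVneq x a) => [->|_]; last by rewrite !subn0.
by move: ap; rewrite in_mset; case: (p a) => // n _; rewrite addSn !subn1.
Qed.

Lemma malgUM (p q : amono) : (<< p >> * << q >> : SPA k) = << (p `+` q)%mset >>.
Proof. by rewrite malgM_def fgmulUU mulr1. Qed.

Definition Fr (m : amono) (a : aroma) (b : raroma) : SPA k :=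
  if b is v :: b' then << ((m `\ a) `+` [mset aroma_of v b'])%mset >> else 0.

Lemma rho_treeE t m : rho_tree k t m =
  \sum_(a <- enum_mset m) \sum_(b <- graft_cycle t (val a)) Fr m a b.
Proof. by []. Qed.

Lemma rho_treeD t p q : rho_tree k t (p `+` q)%mset =
  rho_tree k t p * (<< q >> : SPA k) + (<< p >> : SPA k) * rho_tree k t q.
Proof.
rewrite !rho_treeE (perm_big _ (perm_enum_msetD p q)) big_cat /=.
rewrite mulr_suml mulr_sumr; congr (_ + _).
  rewrite big_seq [RHS]big_seq; apply: eq_bigr => a ap.
  rewrite mulr_suml; apply: eq_bigr => b _; rewrite /Fr.
  case: b => [|v b']; first by rewrite mul0r.
  by rewrite malgUM (msetBD1l _ ap) msetDAC.
rewrite big_seq [RHS]big_seq; apply: eq_bigr => a aq.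
rewrite mulr_sumr; apply: eq_bigr => b _; rewrite /Fr.
case: b => [|v b']; first by rewrite mulr0.
rewrite malgUM [(p `+` q)%mset]msetDC (msetBD1l _ aq).
by rewrite [(q `\ a `+` p)%mset]msetDC msetDA.
Qed.

Lemma scalerAr_malg (K : monomType) (w z : {malg k[K]}) c :
  w * (c *: z) = c *: (w * z).
Proof.
have E : w * c%:MP = c *: w.
  rewrite malgM_def fgmulgU malgZ_def /fgscale; apply: eq_bigr => m _.
  by rewrite mulm1 mulrC.
by rewrite -mul_malgC mulrA E scalerAl.
Qed.

Lemma lin_mulr (K : monomType) (w : {malg k[K]}) : lin (fun z => z * w).
Proof. by move=> c x y; rewrite mulrDl scalerAl. Qed.
Lemma lin_mull (K : monomType) (w : {malg k[K]}) : lin (fun z => w * z).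
Proof. by move=> c x y; rewrite mulrDr scalerAr_malg. Qed.



Lemma deriv_mono (D : SPA k -> SPA k) : lin D ->
  (forall p q, D (<< p >> * << q >>) = D << p >> * << q >> + << p >> * D << q >>) ->
  derivS D.
Proof.
move=> HD E a b.
have L1 : forall b, lin (fun a => D (a * b) - (D a * b + a * D b)).
  move=> b'; apply: lin_sub; first exact: (lin_comp HD (lin_mulr b')).
  by apply: lin_add; [apply: (lin_comp (lin_mulr b') HD)|apply: lin_mulr].
apply/eqP; rewrite -subr_eq0; apply/eqP.
rewrite (lin_ext (L1 b) (@lin_cst0 _ _ _)) // => p.
have L2 : lin (fun b => D (<< p >> * b) - (D << p >> * b + << p >> * D b)).
  apply: lin_sub; first exact: (lin_comp HD (lin_mull _)).
  by apply: lin_add; [apply: lin_mull|apply: (lin_comp (lin_mull _) HD)].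
rewrite (lin_ext L2 (@lin_cst0 _ _ _)) // => q.
by rewrite E subrr.
Qed.

End Comb.
Section LieSec.
Variables (k : fieldType) (gr : TPT k -> TPT k -> TPT k) (rho : TPT k -> SPA k -> SPA k).
Hypothesis H : grafting_ops gr rho.

Let Hlin := proj1 H.
Let Htree := proj1 (proj2 H).
Let Hder := proj1 (proj2 (proj2 H)).
Let Hjac := proj1 (proj2 (proj2 (proj2 H))).
Let Hrlin := proj1 (proj2 (proj2 (proj2 (proj2 H)))).
Let Hrtree := proj1 (proj2 (proj2 (proj2 (proj2 (proj2 H))))).
Let Hrbr := proj2 (proj2 (proj2 (proj2 (proj2 (proj2 H))))).

Lemma gr_linl Z : lin (fun X => gr X Z).
Proof. by move=> a X Y; case: (Hlin a X Y Z). Qed.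
Lemma gr_linr Z : lin (gr Z).
Proof. by move=> a X Y; case: (Hlin a X Y Z). Qed.
Lemma rho_linl al : lin (fun X => rho X al).
Proof. by move=> a X Y; case: (Hrlin a X Y al). Qed.
Lemma rho_linr X : lin (rho X).
Proof.
move=> a al be; case: (Hrlin a X X al) => _ [HZ _].
case: (Hrlin a X X (a *: al)) => _ [_ HD]; by rewrite HD HZ.
Qed.

Inductive isLieN : nat -> TPT k -> Prop :=
| LN_tree t : isLieN 1 (tree_el k t)
| LN_zero : isLieN 0 0
| LN_lin n a X Y : isLieN n X -> isLieN n Y -> isLieN n (a *: X + Y)
| LN_mono n m X : isLieN n X -> (n <= m)%N -> isLieN m X
| LN_br n m X Y : isLieN n X -> isLieN m Y -> isLieN (n + m) (tbr X Y).

Lemma LN_0 n : isLieN n 0.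
Proof. exact: (LN_mono LN_zero). Qed.
Lemma LN_add n X Y : isLieN n X -> isLieN n Y -> isLieN n (X + Y).
Proof. by move=> hX hY; have := LN_lin 1 hX hY; rewrite scale1r. Qed.
Lemma LN_opp n X : isLieN n X -> isLieN n (- X).
Proof. by move=> hX; have := LN_lin (-1) hX (LN_0 n); rewrite addr0 scaleN1r. Qed.
Lemma LN_sub n X Y : isLieN n X -> isLieN n Y -> isLieN n (X - Y).
Proof. by move=> hX hY; apply: LN_add => //; apply: LN_opp. Qed.
Lemma LN_sum n (I : Type) (s : seq I) (F : I -> TPT k) :
  (forall i, isLieN n (F i)) -> isLieN n (\sum_(i <- s) F i).
Proof.
move=> h; elim: s => [|i s IH]; first by rewrite big_nil; apply: LN_0.
by rewrite big_cons; apply: LN_add.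
Qed.

Lemma isLie_LN X : isLie X -> exists n, isLieN n X.
Proof.
elim => [t||a X0 Y0 _ [n hX] _ [m hY]|X0 Y0 _ [n hX] _ [m hY]].
- by exists 1%N; apply: LN_tree.
- by exists 0%N; apply: LN_zero.
- exists (maxn n m); apply: LN_lin.
    by apply: (LN_mono hX); rewrite leq_maxl.
  by apply: (LN_mono hY); rewrite leq_maxr.
- by exists (n + m)%N; apply: LN_br.
Qed.

Lemma LN_Lie n X : isLieN n X -> isLie X.
Proof.
elim => [t||n0 a X0 Y0 _ h1 _ h2|n0 m X0 _ h _|n0 m X0 Y0 _ h1 _ h2].
- exact: isLie_tree.
- exact: isLie_zero.
- exact: isLie_lin.
- exact: h.
- exact: isLie_br.
Qed.

Lemma LN0 n X : isLieN n X -> n = 0%N -> X = 0.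
Proof.
elim => //.
- by move=> n0 a X0 Y0 _ IH1 _ IH2 E; rewrite IH1 // IH2 // scaler0 addr0.
- by move=> n0 m X0 _ IH le E; apply: IH; move: le; rewrite E leqn0 => /eqP.
- move=> n0 m X0 Y0 _ IH1 _ IH2 /eqP; rewrite addn_eq0 => /andP [/eqP e1 /eqP e2].
  by rewrite IH1 // IH2 // /tbr mulr0 subrr.
Qed.

Lemma tbr0l (Y : TPT k) : tbr 0 Y = 0.
Proof. by rewrite /tbr mul0r mulr0 subrr. Qed.
Lemma tbr0r (Y : TPT k) : tbr Y 0 = 0.
Proof. by rewrite /tbr mul0r mulr0 subrr. Qed.

Lemma gr_tree t m Y : isLieN m Y -> isLieN m (gr (tree_el k t) Y).
Proof.
elim => {m Y}.
- move=> t'; rewrite Htree /graftT; apply: LN_sum => s; exact: LN_tree.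
- by rewrite (lin0 (gr_linr _)); apply: LN_zero.
- by move=> n a X Y _ IH1 _ IH2; rewrite (gr_linr _); apply: LN_lin.
- by move=> n m X _ IH le; apply: (LN_mono IH).
- move=> n m X Y hX IH1 hY IH2.
  rewrite Hder; [|exact: isLie_tree|exact: (LN_Lie hX)|exact: (LN_Lie hY)].
  by apply: LN_add; apply: LN_br.
Qed.

Definition QG X := forall m Y, isLieN m Y -> isLieN m (gr X Y).

Lemma gr_LN_aux N : (forall n X, (n < N)%N -> isLieN n X -> QG X) ->
  forall n X, (n <= N)%N -> isLieN n X -> QG X.
Proof.
move=> IHo n X le hX; elim: hX le => {n X}.
- by move=> t _ m Y; apply: gr_tree.
- by move=> _ m Y _; rewrite (lin0 (gr_linl _)); apply: LN_0.
- move=> n a X Y _ IH1 _ IH2 le m Z hZ; rewrite (gr_linl _).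
  by apply: LN_lin; [apply: IH1|apply: IH2].
- by move=> n m X _ IH nm le; apply: IH; apply: leq_trans le.
- move=> n1 n2 X1 X2 h1 IH1 h2 IH2 le m Z hZ.
  have le1 : (n1 <= N)%N by apply: leq_trans le; apply: leq_addr.
  have le2 : (n2 <= N)%N by apply: leq_trans le; apply: leq_addl.
  case: (posnP n1) => [e1|p1].
    by rewrite (LN0 h1 e1) tbr0l (lin0 (gr_linl _)); apply: LN_0.
  case: (posnP n2) => [e2|p2].
    by rewrite (LN0 h2 e2) tbr0r (lin0 (gr_linl _)); apply: LN_0.
  have lt1 : (n1 < N)%N by apply: leq_trans le; rewrite -addn1 leq_add2l.
  have lt2 : (n2 < N)%N by apply: leq_trans le; rewrite -add1n leq_add2r.
  have hZ' := LN_Lie hZ.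
  rewrite Hjac; [|exact: (LN_Lie h1)|exact: (LN_Lie h2)|exact: hZ'].
  apply: LN_add; [apply: LN_sub; [apply: LN_sub|]|].
  + by apply: IH1 => //; apply: IH2.
  + by apply: (IHo n2) => //; apply: IH1.
  + by apply: IH2 => //; apply: IH1.
  + by apply: (IHo n1) => //; apply: IH2.
Qed.

Lemma gr_LN N n X : (n <= N)%N -> isLieN n X -> QG X.
Proof.
elim: N n X => [|N IH]; apply: gr_LN_aux => //.
Qed.

Lemma gr_Lie X Y : isLie X -> isLie Y -> isLie (gr X Y).
Proof.
move=> /isLie_LN [n hX] /isLie_LN [m hY].
exact: (LN_Lie (gr_LN (leqnn n) hX hY)).
Qed.


Lemma rho_tree_deriv t : derivS (rho (tree_el k t)).
Proof.
apply: deriv_mono; first exact: rho_linr.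
move=> p q; rewrite malgUM; apply: (etrans (Hrtree t _)).
by rewrite rho_treeD -!Hrtree.
Qed.

Definition QD X := derivS (rho X).

Lemma rho0 al : rho 0 al = 0.
Proof. exact: (lin0 (rho_linl al)). Qed.

Lemma deriv_LN_aux N : (forall n X, (n < N)%N -> isLieN n X -> QD X) ->
  forall n X, (n <= N)%N -> isLieN n X -> QD X.
Proof.
move=> IHo n X le hX; elim: hX le => {n X}.
- by move=> t _; apply: rho_tree_deriv.
- by move=> _ a b; rewrite !rho0 mul0r mulr0 addr0.
- move=> n c X Y _ IH1 _ IH2 le a b.
  rewrite !(proj1 (Hrlin _ _ _ _)) IH1 // IH2 //.
  rewrite mulrDl mulrDr -scalerAl -scalerAr scalerDr; exact: addrACA.
- by move=> n m X _ IH nm le; apply: IH; apply: leq_trans le.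
- move=> n1 n2 X1 X2 h1 IH1 h2 IH2 le.
  have le1 : (n1 <= N)%N by apply: leq_trans le; apply: leq_addr.
  have le2 : (n2 <= N)%N by apply: leq_trans le; apply: leq_addl.
  case: (posnP n1) => [e1|p1].
    by rewrite (LN0 h1 e1) tbr0l => a b; rewrite !rho0 mul0r mulr0 addr0.
  case: (posnP n2) => [e2|p2].
    by rewrite (LN0 h2 e2) tbr0r => a b; rewrite !rho0 mul0r mulr0 addr0.
  have lt1 : (n1 < N)%N by apply: leq_trans le; rewrite -addn1 leq_add2l.
  have lt2 : (n2 < N)%N by apply: leq_trans le; rewrite -add1n leq_add2r.
  have L1 := LN_Lie h1; have L2 := LN_Lie h2.
  move=> a b; rewrite !Hrbr //.
  have := @deriv_br_gen _ (rho X1) (rho X2) (rho (gr X1 X2)) (rho (gr X2 X1)).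
  apply.
  + exact: (linD (rho_linr X1)).
  + exact: (linD (rho_linr X2)).
  + exact: IH1.
  + exact: IH2.
  + by apply: (IHo n2) => //; apply: (gr_LN (leqnn n1) h1 h2).
  + by apply: (IHo n1) => //; apply: (gr_LN (leqnn n2) h2 h1).
Qed.

Lemma deriv_LN N n X : (n <= N)%N -> isLieN n X -> QD X.
Proof.
elim: N n X => [|N IH]; apply: deriv_LN_aux => //.
Qed.

Lemma rho_deriv X : isLie X -> derivS (rho X).
Proof. by move=> /isLie_LN [n hX]; apply: (deriv_LN (leqnn n) hX). Qed.

End LieSec.

Lemma malgUU (K : monomType) (R : nzRingType) (x y : K) :
  (<< x >> * << y >> : {malg R[K]}) = << mmul x y >>.
Proof. by rewrite malgM_def fgmulUU mulr1. Qed.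

Section TensSec.
Variable k : fieldType.

Lemma tens_linl (X : TPT k) : lin (fun al => tens al X).
Proof. exact: (B_linl (fun (p : amono) (q : word) => (<< (p, q) : apmono >> : VAPT k)) X). Qed.
Lemma tens_linr (al : SPA k) : lin (tens al).
Proof. exact: (B_linr (fun (p : amono) (q : word) => (<< (p, q) : apmono >> : VAPT k)) al). Qed.
Lemma tensU (p : amono) (q : word) : tens (<< p >> : SPA k) (<< q >> : TPT k) = << (p, q) : apmono >>.
Proof. exact: (BU (fun (p : amono) (q : word) => (<< (p, q) : apmono >> : VAPT k))). Qed.

Lemma tensM (a b : SPA k) (X Y : TPT k) : tens a X * tens b Y = tens (a * b) (X * Y).
Proof.
move: a; apply: (@lin_ext _ _ _ (fun a => tens a X * tens b Y) (fun a => tens (a * b) (X * Y))).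
- exact: (lin_comp (lin_mulr _) (tens_linl _)).
- exact: (lin_comp (tens_linl _) (lin_mulr _)).
move=> p; move: X.
apply: (@lin_ext _ _ _ (fun X => tens <<p>> X * tens b Y) (fun X => tens (<<p>> * b) (X * Y))).
- exact: (lin_comp (lin_mulr _) (tens_linr _)).
- exact: (lin_comp (tens_linr _) (lin_mulr _)).
move=> q; move: b.
apply: (@lin_ext _ _ _ (fun b => tens <<p>> <<q>> * tens b Y) (fun b => tens (<<p>> * b) (<<q>> * Y))).
- exact: (lin_comp (lin_mull _) (tens_linl _)).
- exact: (lin_comp (tens_linl _) (lin_mull _)).
move=> p'; move: Y.
apply: (@lin_ext _ _ _ (fun Y => tens <<p>> <<q>> * tens <<p'>> Y) (fun Y => tens (<<p>> * <<p'>>) (<<q>> * Y))).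
- exact: (lin_comp (lin_mull _) (tens_linr _)).
- exact: (lin_comp (tens_linr _) (lin_mull _)).
move=> q' /=.
rewrite !malgUU !tensU malgUU; by [].
Qed.

Lemma vbr_tens (a b : SPA k) (X Y : TPT k) : vbr (tens a X) (tens b Y) = tens (a * b) (tbr X Y).
Proof. by rewrite /vbr !tensM [b * a]mulrC /tbr (linB (tens_linr _)). Qed.

Lemma vbr_linl (w : VAPT k) : lin (fun z => vbr z w).
Proof. exact: (lin_sub (lin_mulr _) (lin_mull _)). Qed.
Lemma vbr_linr (w : VAPT k) : lin (vbr w).
Proof. exact: (lin_sub (lin_mull _) (lin_mulr _)). Qed.

End TensSec.

Section VgrSec.
Variables (k : fieldType) (gr : TPT k -> TPT k -> TPT k) (rho : TPT k -> SPA k -> SPA k).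
Hypothesis H : grafting_ops gr rho.

Lemma vgr_linl (w : VAPT k) : lin (fun z => vgr gr rho z w).
Proof. exact: B_linl. Qed.
Lemma vgr_linr (w : VAPT k) : lin (vgr gr rho w).
Proof. exact: B_linr. Qed.

Lemma vgr_tens (a b : SPA k) (X Y : TPT k) :
  vgr gr rho (tens a X) (tens b Y) = tens (a * rho X b) Y + tens (a * b) (gr X Y).
Proof.
move: a; apply: (@lin_ext _ _ _ (fun a => vgr gr rho (tens a X) (tens b Y))
   (fun a => tens (a * rho X b) Y + tens (a * b) (gr X Y))).
- exact: (lin_comp (vgr_linl _) (tens_linl _)).
- by apply: lin_add; apply: (lin_comp (tens_linl _) (lin_mulr _)).
move=> p; move: X.
apply: (@lin_ext _ _ _ (fun X => vgr gr rho (tens <<p>> X) (tens b Y))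
   (fun X => tens (<<p>> * rho X b) Y + tens (<<p>> * b) (gr X Y))).
- exact: (lin_comp (vgr_linl _) (tens_linr _)).
- apply: lin_add; first exact: (lin_comp (tens_linl _) (lin_comp (lin_mull _) (rho_linl H _))).
  exact: (lin_comp (tens_linr _) (gr_linl H _)).
move=> q; move: b.
apply: (@lin_ext _ _ _ (fun b => vgr gr rho (tens <<p>> <<q>>) (tens b Y))
   (fun b => tens (<<p>> * rho <<q>> b) Y + tens (<<p>> * b) (gr <<q>> Y))).
- exact: (lin_comp (vgr_linr _) (tens_linl _)).
- apply: lin_add; first exact: (lin_comp (tens_linl _) (lin_comp (lin_mull _) (rho_linr H _))).
  exact: (lin_comp (tens_linl _) (lin_mull _)).
move=> p'; move: Y.
apply: (@lin_ext _ _ _ (fun Y => vgr gr rho (tens <<p>> <<q>>) (tens <<p'>> Y))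
   (fun Y => tens (<<p>> * rho <<q>> <<p'>>) Y + tens (<<p>> * <<p'>>) (gr <<q>> Y))).
- exact: (lin_comp (vgr_linr _) (tens_linr _)).
- apply: lin_add; first exact: (tens_linr _).
  exact: (lin_comp (tens_linr _) (gr_linr H _)).
move=> q'.
transitivity (vgr gr rho << (p, q) : apmono >> << (p', q') : apmono >>).
  exact: (congr2 (vgr gr rho) (tensU k p q) (tensU k p' q')).
exact: (BU _ (p, q) (p', q')).
Qed.

End VgrSec.

Lemma zjac (V : zmodType) (a b c d e f : V) :
  (a - b - (c - d)) + (c - e - (f - b)) + (f - d - (a - e)) = 0.
Proof.
rewrite !opprB !addrA subrK.
rewrite [_ + b]addrC !addrA subrK.
by rewrite [b + a]addrC addrK [_ - d]addrAC addrK subrK subrr.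
Qed.

Lemma jacobi (R : pzRingType) (x y z : R) :
  let br a b := a * b - b * a in br x (br y z) + br y (br z x) + br z (br x y) = 0.
Proof. by move=> br; rewrite /br !mulrBr !mulrBl !mulrA; exact: zjac. Qed.

Section Abstract.
Variables (S : comNzRingType) (L V : zmodType).
Variables (ts : S -> L -> V) (vb vg : V -> V -> V) (gr tb : L -> L -> L) (rh : L -> S -> S).
Hypotheses (tsD1 : forall u v W, ts (u + v) W = ts u W + ts v W)
  (tsB1 : forall u v W, ts (u - v) W = ts u W - ts v W)
  (tsD2 : forall u W1 W2, ts u (W1 + W2) = ts u W1 + ts u W2)
  (tsB2 : forall u W1 W2, ts u (W1 - W2) = ts u W1 - ts u W2)
  (ts0 : forall W, ts 0 W = 0)
  (vbD1 : forall x y z, vb (x + y) z = vb x z + vb y z)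
  (vbD2 : forall x y z, vb z (x + y) = vb z x + vb z y)
  (vgD1 : forall x y z, vg (x + y) z = vg x z + vg y z)
  (vgD2 : forall x y z, vg z (x + y) = vg z x + vg z y)
  (vbT : forall a b X Y, vb (ts a X) (ts b Y) = ts (a * b) (tb X Y))
  (vgT : forall a b X Y, vg (ts a X) (ts b Y) = ts (a * rh X b) Y + ts (a * b) (gr X Y)).

Lemma ax1_abs a b c X Y Z :
  derivS (rh X) -> gr X (tb Y Z) = tb (gr X Y) Z + tb Y (gr X Z) ->
  vg (ts a X) (vb (ts b Y) (ts c Z)) -
    (vb (vg (ts a X) (ts b Y)) (ts c Z) + vb (ts b Y) (vg (ts a X) (ts c Z))) = 0.
Proof.
move=> dX hd; apply/eqP; rewrite subr_eq0; apply/eqP.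
rewrite vbT vgT vgT vbD1 !vbT vgT vbD2 !vbT dX hd.
have -> : a * (rh X b * c + b * rh X c) = a * rh X b * c + b * (a * rh X c) by ring.
have -> : a * (b * c) = a * b * c by ring.
have -> : b * (a * c) = a * b * c by ring.
rewrite tsD1 tsD2; exact: addrACA.
Qed.

Definition NF (D1 D2 D3 : L) (e : S) (z x y : S) (W : L) :=
  ts z D1 + ts x D2 + ts y D3 + ts e W.

Lemma add4 (A B C E A' B' C' E' : V) :
  (A + B + C + E) + (A' + B' + C' + E') = (A + A') + (B + B') + (C + C') + (E + E').
Proof.
rewrite addrACA; congr (_ + _); rewrite addrACA; congr (_ + _); exact: addrACA.
Qed.

Lemma NF_sub D1 D2 D3 e z x y W z' x' y' W' :
  NF D1 D2 D3 e z x y W - NF D1 D2 D3 e z' x' y' W' =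
  NF D1 D2 D3 e (z - z') (x - x') (y - y') (W - W').
Proof. by rewrite /NF !tsB1 tsB2 !opprD; exact: add4. Qed.

Lemma NF_add D1 D2 D3 e z x y W z' x' y' W' :
  NF D1 D2 D3 e z x y W + NF D1 D2 D3 e z' x' y' W' =
  NF D1 D2 D3 e (z + z') (x + x') (y + y') (W + W').
Proof. by rewrite /NF !tsD1 tsD2; exact: add4. Qed.

Lemma ax2_abs a b c X Y Z :
  derivS (rh X) -> derivS (rh Y) ->
  rh (tb X Y) c = rh X (rh Y c) - rh (gr X Y) c - rh Y (rh X c) + rh (gr Y X) c ->
  gr (tb X Y) Z = gr X (gr Y Z) - gr (gr X Y) Z - gr Y (gr X Z) + gr (gr Y X) Z ->
  vg (vb (ts a X) (ts b Y)) (ts c Z) -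
    (vg (ts a X) (vg (ts b Y) (ts c Z)) - vg (vg (ts a X) (ts b Y)) (ts c Z)
     - vg (ts b Y) (vg (ts a X) (ts c Z)) + vg (vg (ts b Y) (ts a X)) (ts c Z)) = 0.
Proof.
move=> dX dY hr hj; apply/eqP; rewrite subr_eq0; apply/eqP.
pose N := NF Z (gr X Z) (gr Y Z) (a * b * c).
have E0 : vg (vb (ts a X) (ts b Y)) (ts c Z) =
    N (a * b * rh (tb X Y) c) 0 0 (gr (tb X Y) Z).
  by rewrite vbT vgT /N /NF !ts0 !addr0.
have E1 : vg (ts a X) (vg (ts b Y) (ts c Z)) =
    N (a * rh X (b * rh Y c)) (a * (b * rh Y c)) (a * rh X (b * c)) (gr X (gr Y Z)).
  by rewrite vgT vgD2 !vgT /N /NF !addrA [a * (b * c)]mulrA.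
have E2 : vg (vg (ts a X) (ts b Y)) (ts c Z) =
    N (a * rh X b * rh Y c + a * b * rh (gr X Y) c) 0 (a * rh X b * c) (gr (gr X Y) Z).
  rewrite vgT vgD1 !vgT /N /NF ts0 addr0 tsD1.
  by rewrite addrACA !addrA.
have E3 : vg (ts b Y) (vg (ts a X) (ts c Z)) =
    N (b * rh Y (a * rh X c)) (b * rh Y (a * c)) (b * (a * rh X c)) (gr Y (gr X Z)).
  rewrite vgT vgD2 !vgT /N /NF.
  have -> : b * (a * c) = a * b * c by ring.
  by rewrite addrACA !addrA.
have E4 : vg (vg (ts b Y) (ts a X)) (ts c Z) =
    N (b * rh Y a * rh X c + b * a * rh (gr Y X) c) (b * rh Y a * c) 0 (gr (gr Y X) Z).
  rewrite vgT vgD1 !vgT /N /NF ts0 addr0 tsD1.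
  have -> : b * a * c = a * b * c by ring.
  by rewrite addrACA !addrA.
rewrite E0 E1 E2 E3 E4 /N !NF_sub NF_add hj; congr NF.
- rewrite hr !dX !dY; ring.
- rewrite dY; ring.
- rewrite dX; ring.
Qed.

End Abstract.

Section MainSec.
Variables (k : fieldType) (gr : TPT k -> TPT k -> TPT k) (rho : TPT k -> SPA k -> SPA k).
Hypothesis H : grafting_ops gr rho.

Lemma lin_sum0 (U W : lmodType k) (f : U -> W) (Hf : lin f) (I : Type) (s : seq I) (F : I -> U) :
  f (\sum_(i <- s) F i) = \sum_(i <- s) f (F i).
Proof. exact: (big_morph _ (linD Hf) (lin0 Hf)). Qed.

Lemma P0 : inAPT (0 : VAPT k).
Proof. by exists [::]; split => //; rewrite big_nil. Qed.

Lemma P_lin a (x y : VAPT k) : inAPT x -> inAPT y -> inAPT (a *: x + y).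
Proof.
move=> [s1 [h1 ->]] [s2 [h2 ->]].
exists ([seq (a *: u.1, u.2) | u <- s1] ++ s2); split.
  move=> u; rewrite mem_cat => /orP [/mapP [v vin ->]|uin]; [exact: (h1 v vin)|exact: (h2 u uin)].
rewrite big_cat big_map scaler_sumr; congr (_ + _); apply: eq_bigr => u _.
by rewrite (linZ (tens_linl _)).
Qed.

Lemma P_add (x y : VAPT k) : inAPT x -> inAPT y -> inAPT (x + y).
Proof. by move=> hx hy; have := P_lin 1 hx hy; rewrite scale1r. Qed.

Lemma P_sum (I : eqType) (s : seq I) (F : I -> VAPT k) :
  (forall i, i \in s -> inAPT (F i)) -> inAPT (\sum_(i <- s) F i).
Proof.
elim: s => [|i s IH] h; first by rewrite big_nil; apply: P0.
rewrite big_cons; apply: P_add; first by apply: h; rewrite inE eqxx.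
by apply: IH => j js; apply: h; rewrite inE js orbT.
Qed.

Lemma P_tens (a : SPA k) (X : TPT k) : isLie X -> inAPT (tens a X).
Proof.
move=> hX; exists [:: (a, X)]; split; last by rewrite big_seq1.
by move=> u; rewrite inE => /eqP ->.
Qed.

Lemma reduce3 (F : VAPT k -> VAPT k -> VAPT k -> VAPT k) :
  (forall y z, lin (fun x => F x y z)) -> (forall x z, lin (fun y => F x y z)) ->
  (forall x y, lin (fun z => F x y z)) ->
  (forall a b c X Y Z, isLie X -> isLie Y -> isLie Z ->
     F (tens a X) (tens b Y) (tens c Z) = 0) ->
  forall x y z, inAPT x -> inAPT y -> inAPT z -> F x y z = 0.
Proof.
move=> L1 L2 L3 E x y z [s1 [h1 ->]] [s2 [h2 ->]] [s3 [h3 ->]].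
rewrite (lin_sum0 (L1 _ _)) big_seq big1 // => u hu.
rewrite (lin_sum0 (L2 _ _)) big_seq big1 // => v hv.
rewrite (lin_sum0 (L3 _ _)) big_seq big1 // => w hw.
by apply: E; [apply: h1|apply: h2|apply: h3].
Qed.

End MainSec.

Theorem mainTheorem2 (k : fieldType)
    (gr : TPT k -> TPT k -> TPT k) (rho : TPT k -> SPA k -> SPA k) :
  grafting_ops gr rho ->
  is_post_Lie (@inAPT k) (@vbr k) (vgr gr rho).
Proof.
move=> H.
have tsD1 : forall (u v : SPA k) (W : TPT k), tens (u + v) W = tens u W + tens v W.
  by move=> u v W; exact: (linD (tens_linl W)).
have tsB1 : forall (u v : SPA k) (W : TPT k), tens (u - v) W = tens u W - tens v W.
  by move=> u v W; exact: (linB (tens_linl W)).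
have tsD2 : forall (u : SPA k) (W1 W2 : TPT k), tens u (W1 + W2) = tens u W1 + tens u W2.
  by move=> u W1 W2; exact: (linD (tens_linr u)).
have tsB2 : forall (u : SPA k) (W1 W2 : TPT k), tens u (W1 - W2) = tens u W1 - tens u W2.
  by move=> u W1 W2; exact: (linB (tens_linr u)).
have ts0 : forall (W : TPT k), tens 0 W = 0.
  by move=> W; exact: (lin0 (tens_linl W)).
have vbD1 : forall x y z : VAPT k, vbr (x + y) z = vbr x z + vbr y z.
  by move=> x y z; exact: (linD (vbr_linl z)).
have vbD2 : forall x y z : VAPT k, vbr z (x + y) = vbr z x + vbr z y.
  by move=> x y z; exact: (linD (vbr_linr z)).
have vgD1 : forall x y z : VAPT k, vgr gr rho (x + y) z = vgr gr rho x z + vgr gr rho y z.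
  by move=> x y z; exact: (linD (vgr_linl gr rho z)).
have vgD2 : forall x y z : VAPT k, vgr gr rho z (x + y) = vgr gr rho z x + vgr gr rho z y.
  by move=> x y z; exact: (linD (vgr_linr gr rho z)).
have vbT := @vbr_tens k.
have vgT := vgr_tens H.
split; first by split; [exact: P0|move=> a x y; exact: P_lin].
split.
  move=> x y [s1 [h1 ->]] [s2 [h2 ->]]; split.
    rewrite (lin_sum0 (vbr_linl _)); apply: P_sum => u hu.
    rewrite (lin_sum0 (vbr_linr _)); apply: P_sum => v hv.
    rewrite vbT; apply: P_tens; apply: isLie_br; [exact: (h1 u hu)|exact: (h2 v hv)].
  rewrite (lin_sum0 (vgr_linl gr rho _)); apply: P_sum => u hu.
  rewrite (lin_sum0 (vgr_linr gr rho _)); apply: P_sum => v hv.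
  rewrite vgT; apply: P_add; apply: P_tens; first exact: (h2 v hv).
  by apply: (gr_Lie H); [exact: (h1 u hu)|exact: (h2 v hv)].
split.
  move=> a x y z _ _ _; split.
  - exact: (vbr_linl z a x y).
  - exact: (vbr_linr z a x y).
  - exact: (vgr_linl gr rho z a x y).
  - exact: (vgr_linr gr rho z a x y).
split; first by move=> x _; rewrite /vbr subrr.
split; first by move=> x y z _ _ _; exact: (jacobi x y z).
split.
  move=> x y z hx hy hz; apply/eqP; rewrite -subr_eq0; apply/eqP.
  move: x y z hx hy hz.
  apply: (@reduce3 k (fun x y z => vgr gr rho x (vbr y z) -
      (vbr (vgr gr rho x y) z + vbr y (vgr gr rho x z)))).
  - move=> y z; exact: (lin_sub (vgr_linl gr rho _)
      (lin_add (lin_comp (vbr_linl _) (vgr_linl gr rho _)) (lin_comp (vbr_linr _) (vgr_linl gr rho _)))).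
  - move=> x z; exact: (lin_sub (lin_comp (vgr_linr gr rho _) (vbr_linl _))
      (lin_add (lin_comp (vbr_linl _) (vgr_linr gr rho _)) (vbr_linl _))).
  - move=> x y; exact: (lin_sub (lin_comp (vgr_linr gr rho _) (vbr_linr _))
      (lin_add (vbr_linr _) (lin_comp (vbr_linr _) (vgr_linr gr rho _)))).
  move=> a b c X Y Z hX hY hZ.
  exact: (ax1_abs tsD1 tsD2 vbD1 vbD2 vbT vgT a b c (rho_deriv H hX)
     ((proj1 (proj2 (proj2 H))) X Y Z hX hY hZ)).
move=> x y z hx hy hz; apply/eqP; rewrite -subr_eq0; apply/eqP.
move: x y z hx hy hz.
apply: (@reduce3 k (fun x y z => vgr gr rho (vbr x y) z -
   (vgr gr rho x (vgr gr rho y z) - vgr gr rho (vgr gr rho x y) z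
    - vgr gr rho y (vgr gr rho x z) + vgr gr rho (vgr gr rho y x) z))).
- move=> y z; exact: (lin_sub (lin_comp (vgr_linl gr rho _) (vbr_linl _))
    (lin_add (lin_sub (lin_sub (vgr_linl gr rho _) (lin_comp (vgr_linl gr rho _) (vgr_linl gr rho _)))
      (lin_comp (vgr_linr gr rho _) (vgr_linl gr rho _))) (lin_comp (vgr_linl gr rho _) (vgr_linr gr rho _)))).
- move=> x z; exact: (lin_sub (lin_comp (vgr_linl gr rho _) (vbr_linr _))
    (lin_add (lin_sub (lin_sub (lin_comp (vgr_linr gr rho _) (vgr_linl gr rho _))
      (lin_comp (vgr_linl gr rho _) (vgr_linr gr rho _))) (vgr_linl gr rho _))
      (lin_comp (vgr_linl gr rho _) (vgr_linl gr rho _)))).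
- move=> x y; exact: (lin_sub (vgr_linr gr rho _)
    (lin_add (lin_sub (lin_sub (lin_comp (vgr_linr gr rho _) (vgr_linr gr rho _)) (vgr_linr gr rho _))
      (lin_comp (vgr_linr gr rho _) (vgr_linr gr rho _))) (vgr_linr gr rho _))).
move=> a b c X Y Z hX hY hZ.
exact: (ax2_abs tsD1 tsB1 tsD2 tsB2 ts0 vgD1 vgD2 vbT vgT a b
  (rho_deriv H hX) (rho_deriv H hY)
  ((proj2 (proj2 (proj2 (proj2 (proj2 (proj2 H)))))) X Y c hX hY)
  ((proj1 (proj2 (proj2 (proj2 H)))) X Y Z hX hY hZ)).
Qed.
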